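(* For the concurrent stepped-wedge design with $m$ interventions and $T\ge3$ periods (described in the context), suppose $2+b-bT\neq0$ and $3+b-2bT\ne 0$ and the relevant matrix is invertible. Then the matrix $\mathbf H$ satisfying $\mathrm E(\hat\theta)=\mathbf H\delta$ (when $\mathrm E(\bar{\mathbf y}_i)=\beta+\mathbf Z_i\delta$) is $$\mathbf H=\Big[\tfrac1c\big(\mathbf I_m+\tfrac dg\mathbf J_m\big)\Big]\otimes\mathbf r'-\tfrac1g\,\mathbf J_m\otimes\mathbf v',$$ where $\otimes$ is the Kronecker product and $\mathbf J_m$ the $m\times m$ all-ones matrix. Consequently, for each $k=1,\dots,m$, $$\mathrm E(\hat\theta_k)=\frac1c\mathbf r'\delta_k+\frac1g\Big(\frac dc\mathbf r'-\mathbf v'\Big)\delta_*,\qquad \delta_*=\sum_{k=1}^m\delta_k .$$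
   Context: Setting: a stepped-wedge trial with $T$ periods, $m$ interventions and a common cluster-period size $n$. The concurrent design has $I=m(T-1)$ clusters; cluster $i$ with $(k-1)(T-1)+1\le i\le k(T-1)$ receives only intervention $k$, and with $l=i-(k-1)(T-1)\in\{1,\dots,T-1\}$ it has $x_{kij}=1$ iff $j>l$ (and $x_{k'ij}=0$ for $k'\ne k$). Exposure time $e_{kij}=\sum_{j'\le j}x_{kij'}$. $\mathbf X_i$ is the $T\times m$ matrix with $(j,k)$ entry $x_{kij}$; $\mathbf Z_{k,i}$ is the $T\times(T-1)$ matrix with $(j,e)$ entry $1$ if $e_{kij}=e$ and $0$ otherwise; $\mathbf Z_i=(\mathbf Z_{1,i},\dots,\mathbf Z_{m,i})$. $\delta=(\delta_1',\dots,\delta_m')'$, $\delta_k=(\delta_{k,1},\dots,\delta_{k,T-1})'$. $\bar{\mathbf y}_i\in\mathbb R^T$ are cluster-period means with $\mathrm{Cov}(\bar{\mathbf y}_i)=\Sigma=\sigma_\alpha^2\mathbf 1\mathbf 1'+(\sigma_\epsilon^2/n)\mathbf I_T$. $\hat\theta=(\hat\theta_1,\dots,\hat\theta_m)'$ is the GLS estimator (known $\Sigma$) of $\theta$ in the working model $\bar{\mathbf y}_i=\beta+\mathbf X_i\theta+\mathbf 1\alpha_i+\bar\epsilon_i$ with unrestricted period effects $\beta\in\mathbb R^T$. Constants: $b=\sigma_\alpha^2/(T\sigma_\alpha^2+\sigma_\epsilon^2/n)$, $c=T(T-1)(3+b-2bT)/6$, $d=T[4T-2-3bT(T-1)]/(12m)$,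 $g=c-md=T(T-2)(2+b-bT)/12$. $\mathbf r,\mathbf v\in\mathbb R^{T-1}$ with $r_j=(T-j)[1+b(1-T-j)/2]$ and $v_j=(T-j)[1-bT+j/(T-1)]/(2m)$, $j=1,\dots,T-1$. *)

(* Defs.v *)
From mathcomp Require Import all_boot all_order all_algebra.
From mathcomp Require Export mxtens.
Set Implicit Arguments. Unset Strict Implicit. Unset Printing Implicit Defensive.
Import Order.TTheory GRing.Theory Num.Theory.
Local Open Scope ring_scope.

Section SW.
Variables (R : realFieldType) (T m : nat).

(* Periods are indexed by j : 'I_T (0-based: paper period j+1).
   Clusters i = 1..m(T-1) are indexed by pairs (k, l) : 'I_m * 'I_(T-1),
   paper cluster i = k(T-1) + l + 1, which receives only intervention k+1
   and has paper parameter l+1. *)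

Definition xind (k : 'I_m) (l : 'I_(T.-1)) (k' : 'I_m) (j : 'I_T) : R :=
  ((k' == k) && (l < j)%N)%:R.

Definition Xmat (k : 'I_m) (l : 'I_(T.-1)) : 'M[R]_(T, m) :=
  \matrix_(j, k') xind k l k' j.

Definition expo (k : 'I_m) (l : 'I_(T.-1)) (k' : 'I_m) (j : 'I_T) : nat :=
  \sum_(j' < T | (j' <= j)%N) ((k' == k) && (l < j')%N).

(* Z_i = (Z_{1,i}, ..., Z_{m,i}) : T x m(T-1); column (k', e) (0-based e,
   paper exposure e+1) sits at position k'(T-1) + e (Kronecker ordering). *)
Definition Zmat (k : 'I_m) (l : 'I_(T.-1)) : 'M[R]_(T, m * T.-1) :=
  \matrix_(j, p) (expo k l (mxtens_unindex p).1 j == (mxtens_unindex p).2.+1)%:R.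

(* delta = (delta_1', ..., delta_m')' built from the m x (T-1) matrix D whose
   k-th row is delta_k'. *)
Definition deltavec (D : 'M[R]_(m, T.-1)) : 'cV[R]_(m * T.-1) :=
  \col_p D (mxtens_unindex p).1 (mxtens_unindex p).2.

Definition Sigma (sa2 se2 : R) (n : nat) : 'M[R]_T :=
  sa2 *: const_mx 1 + (se2 / n%:R) *: 1%:M.

Definition Wmat (k : 'I_m) (l : 'I_(T.-1)) : 'M[R]_(T, T + m) :=
  row_mx 1%:M (Xmat k l).

Definition glsM (sa2 se2 : R) (n : nat) : 'M[R]_(T + m) :=
  \sum_(k < m) \sum_(l < T.-1)
     (Wmat k l)^T *m invmx (Sigma sa2 se2 n) *m Wmat k l.

Definition gls_est (sa2 se2 : R) (n : nat)
    (ys : 'I_m -> 'I_(T.-1) -> 'cV[R]_T) : 'cV[R]_(T + m) :=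
  invmx (glsM sa2 se2 n) *m
    \sum_(k < m) \sum_(l < T.-1)
       (Wmat k l)^T *m invmx (Sigma sa2 se2 n) *m ys k l.

Definition gls_theta (sa2 se2 : R) (n : nat)
    (ys : 'I_m -> 'I_(T.-1) -> 'cV[R]_T) : 'cV[R]_m :=
  dsubmx (gls_est sa2 se2 n ys).

Definition bconst (sa2 se2 : R) (n : nat) : R :=
  sa2 / (T%:R * sa2 + se2 / n%:R).
Definition cconst (b : R) : R :=
  T%:R * (T%:R - 1) * (3 + b - 2 * b * T%:R) / 6.
Definition dconst (b : R) : R :=
  T%:R * (4 * T%:R - 2 - 3 * b * T%:R * (T%:R - 1)) / (12 * m%:R).
Definition gconst (b : R) : R := cconst b - m%:R * dconst b.

(* r and v, with 0-based index j (paper index j+1). *)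
Definition rvec (b : R) : 'cV[R]_(T.-1) :=
  \col_j ((T%:R - j.+1%:R) * (1 + b * (1 - T%:R - j.+1%:R) / 2)).
Definition vvec (b : R) : 'cV[R]_(T.-1) :=
  \col_j ((T%:R - j.+1%:R) * (1 - b * T%:R + j.+1%:R / (T%:R - 1)) / (2 * m%:R)).

Definition Hmat (b : R) : 'M[R]_(m * 1, m * T.-1) :=
  ((cconst b)^-1 *: (1%:M + (dconst b / gconst b) *: const_mx 1)) *t (rvec b)^T
  - ((gconst b)^-1 *: const_mx 1) *t (vvec b)^T.

End SW.

(* Main.v *)
Require Import Defs.
From mathcomp Require Import all_boot all_order all_algebra.
From mathcomp Require Import mxtens ring zify.
Set Implicit Arguments. Unset Strict Implicit. Unset Printing Implicit Defensive.
Import Order.TTheory GRing.Theory Num.Theory.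
Local Open Scope ring_scope.

Section Sums.
Variable R : realFieldType.
Implicit Types (f : nat -> R).

Lemma sumj n : \sum_(0 <= j < n.+1) (j%:R : R) = n%:R * (n%:R + 1) / 2.
Proof.
elim: n => [|n IH]; first by rewrite big_nat1 /= mul0r mul0r.
rewrite big_nat_recr //= IH -(natr1 (R:=R) n) /=. by field.
Qed.

Lemma sumj2 n : \sum_(0 <= j < n.+1) (j%:R ^+ 2 : R) = n%:R * (n%:R + 1) * (2 * n%:R + 1) / 6.
Proof.
elim: n => [|n IH]; first by rewrite big_nat1 /= expr2 !mul0r.
rewrite big_nat_recr //= IH -(natr1 (R:=R) n) /=. by field.
Qed.

Lemma sumP1 f n : \sum_(0 <= j < n.+1) \sum_(0 <= x < j) f x
   = \sum_(0 <= x < n) f x * (n%:R - x%:R).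
Proof.
elim: n => [|n IH]; first by rewrite big_nat1 !big_geq.
rewrite big_nat_recr //= IH [in RHS]big_nat_recr //= -(natr1 (R:=R) n).
have -> : \sum_(0 <= x < n) f x * (n%:R + 1 - x%:R) =
  \sum_(0 <= x < n) f x * (n%:R - x%:R) + \sum_(0 <= x < n) f x * 1.
  by rewrite -big_split /=; apply: eq_bigr => x _; ring.
rewrite big_nat_recr //=; under [X in _ = _ + X + _]eq_bigr do rewrite mulr1.
ring.
Qed.

Lemma sumP2 f n : \sum_(0 <= j < n.+1) j%:R * \sum_(0 <= x < j) f x
   = \sum_(0 <= x < n) f x * ((n%:R * (n%:R + 1) - x%:R * (x%:R + 1)) / 2).
Proof.
elim: n => [|n IH]; first by rewrite big_nat1 !big_geq ?mulr0.
rewrite big_nat_recr //= IH [in RHS]big_nat_recr //=.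
rewrite -(natr1 (R:=R) n).
have -> : \sum_(0 <= x < n) f x * (((n%:R + 1) * (n%:R + 1 + 1) - x%:R * (x%:R + 1)) / 2) =
  \sum_(0 <= x < n) f x * ((n%:R * (n%:R + 1) - x%:R * (x%:R + 1)) / 2) + \sum_(0 <= x < n) f x * (n%:R + 1).
  by rewrite -big_split /=; apply: eq_bigr => x _; field.
rewrite -mulr_suml big_nat_recr //=. by field.
Qed.

Lemma sum_refl (F : nat -> R) n : \sum_(0 <= l < n) F (n - l)%N = \sum_(0 <= j < n.+1) F j - F 0%N.
Proof.
elim: n => [|n IH]; first by rewrite big_geq // big_nat1 subrr.
rewrite big_nat_recl // subn0 [in RHS]big_nat_recr //=.
under eq_bigr do rewrite subSS.
rewrite IH. by ring.
Qed.

End Sums.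
Section Sums2.
Variable R : realFieldType.
Implicit Types (f : nat -> R).

Lemma ind_a n l : \sum_(0 <= j < n) (((l < j)%N)%:R : R) = (n - l.+1)%:R.
Proof.
elim: n => [|n IH]; first by rewrite big_geq.
rewrite big_nat_recr //= IH -natrD; congr (_%:R).
case: ltnP => h /=; lia.
Qed.

Lemma ind_b f n l : \sum_(0 <= j < n) ((l < j)%N)%:R * f (j - l.+1)%N
   = \sum_(0 <= x < n - l.+1) f x.
Proof.
elim: n => [|n IH]; first by rewrite !big_geq.
rewrite big_nat_recr //= IH.
case: (ltnP l n) => h.
  have -> : (n.+1 - l.+1 = (n - l.+1).+1)%N by lia.
  by rewrite big_nat_recr //= mul1r.
have -> : (n.+1 - l.+1 = n - l.+1)%N by lia.
by rewrite mul0r addr0.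
Qed.

Lemma ind_c n j : (j <= n)%N -> \sum_(0 <= l < n) (((l < j)%N)%:R : R) = j%:R.
Proof.
move=> hj; rewrite (big_cat_nat (leq0n j) hj) /=.
rewrite [X in _ + X]big1_seq ?addr0; last first.
  by move=> i /andP [_]; rewrite mem_index_iota => /andP [h _]; rewrite ltnNge h.
rewrite big_nat_cond (eq_bigr (fun _ => 1)); last first.
  by move=> i /andP [/andP [_ ->] _].
by rewrite -big_nat_cond sumr_const_nat subn0.
Qed.

Lemma ind_d f n j : (j <= n)%N ->
  \sum_(0 <= l < n) ((l < j)%N)%:R * f (j - l.+1)%N = \sum_(0 <= x < j) f x.
Proof.
move=> hj; rewrite (big_cat_nat (leq0n j) hj) /=.
rewrite [X in _ + X]big1_seq ?addr0; last first.
  by move=> i /andP [_]; rewrite mem_index_iota => /andP [h _]; rewrite ltnNge h mul0r.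
rewrite big_nat_rev /= add0n.
apply: eq_big_nat => i /andP [_ hi].
have -> : (j - (j - i.+1).+1 = i)%N by lia.
by rewrite (_ : (j - i.+1 < j)%N) ?mul1r //; lia.
Qed.

Lemma sumrD' (I : Type) (r : seq I) (P : pred I) (F G : I -> R) :
  \sum_(i <- r | P i) (F i + G i) = \sum_(i <- r | P i) F i + \sum_(i <- r | P i) G i.
Proof. by rewrite big_split. Qed.

Lemma ind_ac n l (c : R) : \sum_(0 <= j < n) ((l < j)%N)%:R * c = (n - l.+1)%:R * c.
Proof. by rewrite -mulr_suml ind_a. Qed.

End Sums2.

Section Core.
Variables (R : realFieldType) (N m : nat) (b : R).
Variables (dl : 'I_m -> nat -> R) (th : 'I_m -> R).
Hypothesis (hN : (0 < N)%N) (hm : (0 < m)%N).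

Definition ds x := \sum_(k < m) dl k x.
Definition ths := \sum_(k < m) th k.
Definition bet (j : nat) := ((\sum_(0 <= x < j) ds x) - j%:R * ths) / (m%:R * N%:R).
Definition ee k (l j : nat) := bet j + ((l < j)%N)%:R * (th k - dl k (j - l.+1)).
Definition SS k l := \sum_(0 <= j < N.+1) ee k l j.

Lemma mN0 : m%:R * N%:R != 0 :> R.
Proof. by rewrite mulf_neq0 // pnatr_eq0 -lt0n. Qed.

Lemma top j : (j <= N)%N -> \sum_(k < m) \sum_(0 <= l < N) ee k l j = 0.
Proof.
move=> hj.
have -> : \sum_(k < m) \sum_(0 <= l < N) ee k l j =
   \sum_(k < m) (N%:R * bet j + j%:R * th k - \sum_(0 <= x < j) dl k x).
  apply: eq_bigr => k _.
  have -> : \sum_(0 <= l < N) ee k l j = \sum_(0 <= l < N) (bet j + ((l < j)%N)%:R * th k - ((l < j)%N)%:R * dl k (j - l.+1)%N).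
    by apply: eq_bigr => l _; rewrite /ee; ring.
  rewrite sumrB big_split sumr_const_nat subn0 mulr_natl -mulr_suml ind_c // ind_d //.
rewrite sumrB big_split sumr_const card_ord -mulr_sumr.
rewrite exchange_big /= -/(ths).
have -> : \sum_(0 <= x < j) \sum_(i < m) dl i x = \sum_(0 <= x < j) ds x by [].
rewrite /bet -mulr_natl. field. by rewrite !pnatr_eq0 -!lt0n hN hm.
Qed.


Lemma topS : \sum_(k < m) \sum_(0 <= l < N) SS k l = 0.
Proof.
rewrite /SS.
under eq_bigr do rewrite exchange_big /=.
rewrite exchange_big /= big1_seq // => j /andP [_].
rewrite mem_index_iota => /andP [_ hj]; exact: top.
Qed.

Definition Bt := \sum_(0 <= j < N.+1) bet j.
Definition Pk k t := \sum_(0 <= x < t) dl k x.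

Lemma ind2 (c : bool) : (c%:R * c%:R : R) = c%:R.
Proof. by case: c; rewrite ?mulr1 ?mulr0. Qed.

Lemma SSE k l : SS k l = Bt + (N - l)%:R * th k - Pk k (N - l).
Proof.
rewrite /SS.
have -> : \sum_(0 <= j < N.+1) ee k l j = \sum_(0 <= j < N.+1) (bet j + ((l < j)%N)%:R * th k - ((l < j)%N)%:R * dl k (j - l.+1)%N).
  by apply: eq_bigr => j _; rewrite /ee; ring.
by rewrite sumrB sumrD' ind_ac ind_b subSS.
Qed.

Lemma row_l k l : \sum_(0 <= j < N.+1) ((l < j)%N)%:R * (ee k l j - b * SS k l) =
  \sum_(0 <= j < N.+1) ((l < j)%N)%:R * bet j
  + (1 - b * (N - l)%:R) * ((N - l)%:R * th k - Pk k (N - l)) - b * (N - l)%:R * Bt.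
Proof.
have -> : \sum_(0 <= j < N.+1) ((l < j)%N)%:R * (ee k l j - b * SS k l) =
  \sum_(0 <= j < N.+1) (((l < j)%N)%:R * bet j + ((l < j)%N)%:R * th k
     - ((l < j)%N)%:R * dl k (j - l.+1)%N - ((l < j)%N)%:R * (b * SS k l)).
  apply: eq_bigr => j _; rewrite /ee.
  by case: (l < j)%N => /=; ring.
rewrite !sumrB sumrD' !ind_ac ind_b subSS SSE /Pk; ring.
Qed.


Definition Nr : R := N%:R.
Definition A1 k := \sum_(0 <= x < N) dl k x * (N%:R - x%:R).
Definition A2 k := \sum_(0 <= x < N) dl k x * ((N%:R * (N%:R + 1) - x%:R * (x%:R + 1)) / 2).
Definition S1 := \sum_(0 <= x < N) ds x * (N%:R - x%:R).
Definition S2 := \sum_(0 <= x < N) ds x * ((N%:R * (N%:R + 1) - x%:R * (x%:R + 1)) / 2).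
Definition cc : R := (N%:R + 1) * N%:R * (3 + b - 2 * b * (N%:R + 1)) / 6.
Definition dd : R := (N%:R + 1) * (4 * (N%:R + 1) - 2 - 3 * b * (N%:R + 1) * N%:R) / (12 * m%:R).

Lemma bottom k
  (Hth : cc * th k = (A1 k - b * A2 k) - (S2 - b * (N%:R * (N%:R + 1) / 2) * S1) / (m%:R * N%:R) + dd * ths) :
  \sum_(0 <= l < N) \sum_(0 <= j < N.+1) ((l < j)%N)%:R * (ee k l j - b * SS k l) = 0.
Proof.
under eq_bigr do rewrite row_l.
rewrite sumrB sumrD' exchange_big /=.
have -> : \sum_(0 <= j < N.+1) \sum_(0 <= l < N) ((l < j)%N)%:R * bet j
    = \sum_(0 <= j < N.+1) j%:R * bet j.
  by apply: eq_big_nat => j /andP [_ hj]; rewrite -mulr_suml ind_c.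
rewrite (sum_refl (fun t => (1 - b * t%:R) * (t%:R * th k - Pk k t))).
rewrite (sum_refl (fun t => b * t%:R * Bt)).
rewrite /Pk (big_geq (leqnn 0)).
have -> : ((0%N)%:R : R) = 0 by [].
have -> : \sum_(0 <= j < N.+1) (1 - b * j%:R) * (j%:R * th k - \sum_(0 <= x < j) dl k x)
   = th k * \sum_(0 <= j < N.+1) j%:R - th k * b * \sum_(0 <= j < N.+1) (j%:R ^+ 2)
     - \sum_(0 <= j < N.+1) \sum_(0 <= x < j) dl k x
     + b * \sum_(0 <= j < N.+1) j%:R * \sum_(0 <= x < j) dl k x.
  by rewrite !mulr_sumr -!sumrB -sumrD'; apply: eq_bigr => j _; ring.
have -> : \sum_(0 <= j < N.+1) b * j%:R * Bt = b * Bt * \sum_(0 <= j < N.+1) j%:R.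
  by rewrite mulr_sumr; apply: eq_bigr => j _; ring.
have -> : \sum_(0 <= j < N.+1) j%:R * bet j
   = (\sum_(0 <= j < N.+1) j%:R * \sum_(0 <= x < j) ds x
      - ths * \sum_(0 <= j < N.+1) (j%:R ^+ 2)) / (m%:R * N%:R).
  rewrite mulr_sumr -sumrB mulr_suml; apply: eq_bigr => j _; rewrite /bet; ring.
have -> : Bt = (\sum_(0 <= j < N.+1) \sum_(0 <= x < j) ds x
      - ths * \sum_(0 <= j < N.+1) j%:R) / (m%:R * N%:R).
  rewrite /Bt mulr_sumr -sumrB mulr_suml; apply: eq_bigr => j _; rewrite /bet; ring.
rewrite !sumj sumj2 !sumP1 !sumP2 -/(A1 k) -/(A2 k) -/S1 -/S2.
have h : cc * th k - (A1 k - b * A2 k) + (S2 - b * (N%:R * (N%:R + 1) / 2) * S1) / (m%:R * N%:R) - dd * ths = 0.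
  by rewrite Hth; ring.
rewrite -[RHS]h /cc /dd. field.
by rewrite !pnatr_eq0 -!lt0n hN hm.
Qed.

End Core.

Section Mat.
Variable R : realFieldType.

Lemma JJ n : (const_mx 1 : 'M[R]_n) *m (const_mx 1 : 'M[R]_n) = n%:R *: (const_mx 1 : 'M[R]_n).
Proof.
apply/matrixP => i j; rewrite !mxE.
under eq_bigr do rewrite !mxE mulr1.
by rewrite sumr_const card_ord mulr1.
Qed.

Lemma invSigma (N n : nat) (sa2 se2 : R) : (0 < n)%N -> 0 <= sa2 -> 0 < se2 ->
  invmx (Sigma N.+1 sa2 se2 n) =
  (se2 / n%:R)^-1 *: (1%:M - bconst N.+1 sa2 se2 n *: const_mx 1).
Proof.
move=> hn hsa hse.
have hs : 0 < se2 / n%:R by rewrite divr_gt0 // ltr0n.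
have hden : N.+1%:R * sa2 + se2 / n%:R != 0.
  by rewrite gt_eqF // ltr_wpDl // mulr_ge0 // ler0n.
have hs0 : se2 / n%:R != 0 by rewrite gt_eqF.
set Y := (se2 / n%:R)^-1 *: _.
have H : Sigma N.+1 sa2 se2 n *m Y = 1%:M.
  rewrite /Sigma /Y mulmxDl -!scalemxAl mul1mx -!scalemxAr mulmxBr mulmx1 -scalemxAr JJ.
  apply/matrixP => i j; rewrite !mxE /bconst.
  move: hden hs0; move: (se2 / n%:R) => s hden hs0.
  field. by rewrite hs0 andbT [1 + _]addrC natr1.
have [hu _] := mulmx1_unit H.
by rewrite -[invmx _]mulmx1 -H mulmxA mulVmx // mul1mx.
Qed.

End Mat.

Section Design.
Variables (R : realFieldType) (N m : nat).

Lemma sum_tens (F : 'I_(m * N) -> R) :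
  \sum_(p < m * N) F p = \sum_(i < m) \sum_(e < N) F (mxtens_index (i, e)).
Proof.
rewrite pair_big /= (reindex (@mxtens_index m N)) /=; last first.
  by exists (@mxtens_unindex m N) => ? _; rewrite (mxtens_indexK, mxtens_unindexK).
by apply: eq_bigr => -[i e].
Qed.

Lemma sum_cnt n l j : (\sum_(j' < n | (j' <= j)%N) (l < j')%N = minn n j.+1 - l.+1)%N.
Proof.
elim: n => [|n IH]; first by rewrite big_ord0.
rewrite big_mkcond big_ord_recr /= -big_mkcond IH.
case: (leqP n j) => h /=; lia.
Qed.

Lemma expoE (k : 'I_m) (l : 'I_N) (k' : 'I_m) (j : 'I_N.+1) :
  @expo N.+1 m k l k' j = if k' == k then (j - l)%N else 0%N.
Proof.
rewrite /expo; case: eqP => _ /=.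
  rewrite sum_cnt; have := ltn_ord j; lia.
by rewrite big1.
Qed.

Definition dlf (D : 'M[R]_(m, N)) (k : 'I_m) (x : nat) : R :=
  \sum_(e < N) ((e == x :> nat))%:R * D k e.

Lemma Zdelta (D : 'M[R]_(m, N)) (k : 'I_m) (l : 'I_N) (j : 'I_N.+1) :
  (@Zmat R N.+1 m k l *m @deltavec R N.+1 m D) j 0 = ((l < j)%N)%:R * dlf D k (j - l.+1).
Proof.
rewrite mxE sum_tens (bigD1 k) //= [X in _ + X]big1 ?addr0; last first.
  move=> k' /negbTE hk; apply: big1 => e _.
  by rewrite !mxE mxtens_indexK /= expoE hk mul0r.
rewrite /dlf mulr_sumr; apply: eq_bigr => e _.
rewrite !mxE mxtens_indexK /= expoE eqxx.
case: (ltnP l j) => h.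
  have -> : ((j - l)%N == e.+1) = (e == (j - l.+1)%N :> nat).
    by apply/eqP/eqP; lia.
  by rewrite mul1r.
have -> : ((j - l)%N == e.+1) = false by apply/eqP; lia.
by rewrite !mul0r.
Qed.

Lemma Xtheta (th : 'cV[R]_m) (k : 'I_m) (l : 'I_N) (j : 'I_N.+1) :
  (@Xmat R N.+1 m k l *m th) j 0 = ((l < j)%N)%:R * th k 0.
Proof.
rewrite mxE (bigD1 k) //= big1 ?addr0; last first.
  by move=> k' /negbTE hk; rewrite !mxE /xind hk /= mul0r.
by rewrite !mxE /xind eqxx.
Qed.


Lemma Hentry (b : R) (D : 'M[R]_(m, N)) (k : 'I_m) :
  castmx (muln1 m, erefl (1%N : nat)) (Hmat N.+1 m b *m @deltavec R N.+1 m D) k 0 =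
  (cconst N.+1 b)^-1 * (\sum_(e < N) rvec N.+1 b e 0 * D k e)
  + (gconst N.+1 m b)^-1 * \sum_(e < N) (dconst N.+1 m b / cconst N.+1 b * rvec N.+1 b e 0
        - vvec N.+1 m b e 0) * (\sum_(k' < m) D k' e).
Proof.
rewrite castmxE.
have -> : cast_ord (esym (muln1 m)) k = mxtens_index (k, ord0).
  by apply: val_inj; rewrite /= muln1 addn0.
rewrite mxE sum_tens.
set c := cconst N.+1 b; set g := gconst N.+1 m b; set d := dconst N.+1 m b.
have -> : \sum_(i < m) \sum_(e < N)
   Hmat N.+1 m b (mxtens_index (k, ord0)) (mxtens_index (i, e)) *
   @deltavec R N.+1 m D (mxtens_index (i, e)) (cast_ord (esym (erefl 1%N)) 0)
 = \sum_(i < m) \sum_(e < N) (c^-1 * (((k == i)%:R) * (rvec N.+1 b e 0 * D i e))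
      + g^-1 * ((d / c * rvec N.+1 b e 0 - vvec N.+1 m b e 0) * D i e)).
  apply: eq_bigr => i _; apply: eq_bigr => e _.
  rewrite /Hmat mxE tensmxE -/c -/g -/d.
  rewrite !mxE !mxtens_indexK /=.
  ring.
under eq_bigr do rewrite sumrD'.
rewrite sumrD'; congr (_ + _).
  rewrite (bigD1 k) //= [X in _ + X]big1 ?addr0; last first.
    move=> i /negbTE hk; apply: big1 => e _.
    by rewrite eq_sym hk mul0r mulr0.
  by rewrite mulr_sumr; apply: eq_bigr => e _; rewrite eqxx mul1r.
rewrite exchange_big /= mulr_sumr; apply: eq_bigr => e _.
by rewrite mulr_sumr [RHS]mulr_sumr.
Qed.

End Design.

Section Conv.
Variables (R : realFieldType) (N m : nat) (D : 'M[R]_(m, N)).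

Lemma conv (k : 'I_m) (F : nat -> R) :
  \sum_(0 <= x < N) dlf D k x * F x = \sum_(e < N) D k e * F e.
Proof.
rewrite big_mkord /dlf.
under eq_bigr do rewrite mulr_suml.
rewrite exchange_big /=; apply: eq_bigr => e _.
rewrite (bigD1 e) //= eqxx mul1r big1 ?addr0 // => x hx.
case: eqP => [/ord_inj h|]; last by rewrite !mul0r.
by rewrite h eqxx in hx.
Qed.

Lemma conv_s (F : nat -> R) :
  \sum_(0 <= x < N) ds (dlf D) x * F x = \sum_(e < N) (\sum_(k < m) D k e) * F e.
Proof.
rewrite /ds.
under eq_bigr do rewrite mulr_suml.
rewrite exchange_big /=.
under eq_bigr do rewrite conv.
rewrite exchange_big /=; apply: eq_bigr => e _.
by rewrite mulr_suml.
Qed.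

Lemma form1 (r : 'cV[R]_N) (k : 'I_m) :
  (r^T *m (row k D)^T) 0 0 = \sum_(e < N) r e 0 * D k e.
Proof. by rewrite mxE; apply: eq_bigr => e _; rewrite !mxE. Qed.

Lemma form2 (r v : 'cV[R]_N) (a : R) :
  ((a *: r^T - v^T) *m (\sum_(k' < m) row k' D)^T) 0 0
  = \sum_(e < N) (a * r e 0 - v e 0) * \sum_(k' < m) D k' e.
Proof.
rewrite mxE; apply: eq_bigr => e _; rewrite !mxE summxE.
by congr (_ * _); apply: eq_bigr => i _; rewrite !mxE.
Qed.

End Conv.

Section Conv2.
Variables (R : realFieldType) (N m : nat) (D : 'M[R]_(m, N)) (b : R).
Hypotheses (hN : (0 < N)%N) (hm : (0 < m)%N).

Lemma ccE : cc N b = cconst N.+1 b.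
Proof. rewrite /cc /cconst -(natr1 (R:=R) N); ring. Qed.

Lemma ddE : dd N m b = dconst N.+1 m b.
Proof. rewrite /dd /dconst -(natr1 (R:=R) N); ring. Qed.

Lemma A12E (k : 'I_m) :
  A1 N (dlf D) k - b * A2 N (dlf D) k = \sum_(e < N) rvec N.+1 b e 0 * D k e.
Proof.
rewrite /A1 /A2 mulr_sumr -sumrB.
have -> : \sum_(0 <= i < N) (dlf D k i * (N%:R - i%:R) -
    b * (dlf D k i * ((N%:R * (N%:R + 1) - i%:R * (i%:R + 1)) / 2))) =
  \sum_(0 <= i < N) dlf D k i * ((N%:R - i%:R) - b * ((N%:R * (N%:R + 1) - i%:R * (i%:R + 1)) / 2)).
  by apply: eq_bigr => i _; ring.
rewrite conv; apply: eq_bigr => e _; rewrite !mxE.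
rewrite -(natr1 (R:=R) N) -(natr1 (R:=R) e); ring.
Qed.

Lemma S12E :
  (S2 N (dlf D) - b * (N%:R * (N%:R + 1) / 2) * S1 N (dlf D)) / (m%:R * N%:R)
  = \sum_(e < N) vvec N.+1 m b e 0 * \sum_(k < m) D k e.
Proof.
rewrite /S1 /S2 mulr_sumr -sumrB mulr_suml.
have -> : \sum_(0 <= i < N) (ds (dlf D) i * ((N%:R * (N%:R + 1) - i%:R * (i%:R + 1)) / 2) -
    b * (N%:R * (N%:R + 1) / 2) * (ds (dlf D) i * (N%:R - i%:R))) / (m%:R * N%:R) =
  \sum_(0 <= i < N) ds (dlf D) i * ((((N%:R * (N%:R + 1) - i%:R * (i%:R + 1)) / 2) -
    b * (N%:R * (N%:R + 1) / 2) * (N%:R - i%:R)) / (m%:R * N%:R)).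
  by apply: eq_bigr => i _; ring.
rewrite conv_s; apply: eq_bigr => e _; rewrite !mxE.
rewrite -(natr1 (R:=R) N) -(natr1 (R:=R) e) addrK mulrC.
field.
by rewrite !pnatr_eq0 -!lt0n hN hm.
Qed.

End Conv2.

Section Mat2.
Variable R : realFieldType.

Lemma YE (s b : R) n (w : 'cV[R]_n) (j : 'I_n) :
  ((s^-1 *: (1%:M - b *: const_mx 1)) *m w) j 0 = s^-1 * (w j 0 - b * \sum_(j' < n) w j' 0).
Proof.
rewrite mxE.
under eq_bigr do rewrite !mxE.
have -> : \sum_(j' < n) s^-1 * ((j == j')%:R - b * 1) * w j' 0 =
   s^-1 * (\sum_(j' < n) (j == j')%:R * w j' 0) - s^-1 * (b * \sum_(j' < n) w j' 0).
  by rewrite !mulr_sumr -sumrB; apply: eq_bigr => k _; ring.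
rewrite (bigD1 j) //= eqxx mul1r big1 ?addr0; first by ring.
by move=> k /negbTE hk; rewrite eq_sym hk mul0r.
Qed.

Lemma sum_col_mx (I : Type) (r : seq I) (P : pred I) p1 p2 q
   (A : I -> 'M[R]_(p1, q)) (B : I -> 'M[R]_(p2, q)) :
  \sum_(i <- r | P i) col_mx (A i) (B i) = col_mx (\sum_(i <- r | P i) A i) (\sum_(i <- r | P i) B i).
Proof.
elim/big_rec3: _ => [|i x y z _ ->]; first by rewrite col_mx0.
by rewrite add_col_mx.
Qed.

Lemma mxEadd p q (A B : 'M[R]_(p, q)) i j : (A + B) i j = A i j + B i j.
Proof. by rewrite mxE. Qed.
Lemma mxEopp p q (A : 'M[R]_(p, q)) i j : (- A) i j = - A i j.
Proof. by rewrite mxE. Qed.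

End Mat2.

Theorem proposition1 (R : realFieldType) (T m n : nat) (sa2 se2 : R)
  (hT : (3 <= T)%N) (hm : (0 < m)%N) (hn : (0 < n)%N)
  (hsa : 0 <= sa2) (hse : 0 < se2)
  (hb1 : 2 + bconst T sa2 se2 n - bconst T sa2 se2 n * T%:R != 0)
  (hb2 : 3 + bconst T sa2 se2 n - 2 * bconst T sa2 se2 n * T%:R != 0)
  (hM : glsM T m sa2 se2 n \in unitmx) :
  let b := bconst T sa2 se2 n in
  let c := cconst T b in
  let d := dconst T m b in
  let g := gconst T m b in
  let r := rvec T b in
  let v := vvec T m b in
  forall (beta : 'cV[R]_T) (D : 'M[R]_(m, T.-1)),
    let Ey := fun (k : 'I_m) (l : 'I_(T.-1)) =>
                beta + Zmat R k l *m deltavec D in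
    let Etheta := gls_theta sa2 se2 n Ey in
    Etheta = castmx (muln1 m, erefl (1%N : nat)) (Hmat T m b *m deltavec D)
    /\ forall k : 'I_m,
         Etheta k 0 =
           c^-1 * (r^T *m (row k D)^T) 0 0
           + g^-1 * ((d / c *: r^T - v^T) *m (\sum_(k' < m) row k' D)^T) 0 0.
Proof.
case: T hT hb1 hb2 hM => [//|N] hT hb1 hb2 hM.
move=> b c d g r v beta D Ey Etheta.
have hN : (0 < N)%N by lia.
have bE : b = bconst N.+1 sa2 se2 n by [].
have cE : c = cconst N.+1 b by [].
have dE : d = dconst N.+1 m b by [].
have gE : g = gconst N.+1 m b by [].
rewrite /Etheta /Ey /r /v.
clearbody b c d g; clear Etheta Ey r v.
rewrite -bE in hb1 hb2.
have e1 : N.+1%:R - 1 = N%:R :> R by rewrite -natr1 addrK.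
have hc : c != 0.
  by rewrite cE /cconst e1 !mulf_neq0 // ?invr_eq0 ?pnatr_eq0 // -lt0n.
have hg : g != 0.
  have -> : g = N.+1%:R * (N%:R - 1) * (2 + b - b * N.+1%:R) / 12.
    rewrite gE /gconst /cconst /dconst -(natr1 (R:=R) N); field.
    by rewrite pnatr_eq0 -lt0n.
  have -> : N%:R - 1 = (N - 1)%:R :> R by rewrite natrB.
  rewrite !mulf_neq0 // ?invr_eq0 ?pnatr_eq0 //; lia.
have gcd : g = c - m%:R * d by rewrite gE cE dE.
set th := castmx (muln1 m, erefl (1%N:nat)) (Hmat N.+1 m b *m deltavec D).
have thE : forall k, th k 0 = c^-1 * (\sum_(e < N) rvec N.+1 b e 0 * D k e)
   + g^-1 * \sum_(e < N) (d / c * rvec N.+1 b e 0 - vvec N.+1 m b e 0) * \sum_(k' < m) D k' e.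
  by move=> k; rewrite /th Hentry cE dE gE.
suff Hth : gls_theta sa2 se2 n (fun k l => beta + Zmat R k l *m deltavec D) = th.
  split; first by rewrite Hth.
  by move=> k; rewrite Hth thE form1 form2.
set dl := dlf D.
set thf := fun k => th k 0.
have Hrel : forall k, cc N b * thf k = A1 N dl k - b * A2 N dl k
   - (S2 N dl - b * (N%:R * (N%:R + 1) / 2) * S1 N dl) / (m%:R * N%:R) + dd N m b * ths thf.
  move=> k; rewrite ccE ddE A12E S12E // /ths /thf -cE -dE.
  rewrite (eq_bigr _ (fun k _ => thE k)) thE.
  rewrite sumrD' -mulr_sumr sumr_const card_ord -mulr_natl exchange_big /=.
  have RS : \sum_(j < N) \sum_(i < m) rvec N.+1 b j 0 * D i j
      = \sum_(e < N) rvec N.+1 b e 0 * \sum_(k' < m) D k' e.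
    by apply: eq_bigr => e _; rewrite mulr_sumr.
  rewrite RS.
  have WE : \sum_(e < N) (d / c * rvec N.+1 b e 0 - vvec N.+1 m b e 0) * \sum_(k' < m) D k' e
     = d / c * (\sum_(e < N) rvec N.+1 b e 0 * \sum_(k' < m) D k' e)
       - \sum_(e < N) vvec N.+1 m b e 0 * \sum_(k' < m) D k' e.
    by rewrite mulr_sumr -sumrB; apply: eq_bigr => e _; ring.
  rewrite WE.
  move: (\sum_(e < N) rvec N.+1 b e 0 * D k e) (\sum_(e < N) rvec N.+1 b e 0 * \sum_(k' < m) D k' e)
     (\sum_(e < N) vvec N.+1 m b e 0 * \sum_(k' < m) D k' e) => a1 a2 a3.
  move: hg; rewrite gcd => hg.
  by field; rewrite hc hg.
rewrite /gls_theta /gls_est.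
set Mg := glsM N.+1 m sa2 se2 n.
set rhs := (X in invmx _ *m X).
set betv := \col_(j < N.+1) bet N dl thf j.
set u := col_mx (beta + betv) th.
suff Mu : Mg *m u = rhs by rewrite -Mu mulKmx // col_mxKd.
set Si := invmx (Sigma N.+1 sa2 se2 n).
set res := fun (k : 'I_m) (l : 'I_N) =>
   betv + @Xmat R N.+1 m k l *m th - @Zmat R N.+1 m k l *m @deltavec R N.+1 m D.
have resE : forall k l (j : 'I_N.+1), res k l j 0 = ee N dl thf k l j.
  move=> k l j; rewrite /res.
  by rewrite !mxEadd mxEopp Xtheta Zdelta /ee mxE /thf /dl mulrBr addrA.
have E1 : forall (k : 'I_m) (l : 'I_N),
   (@Wmat R N.+1 m k l)^T *m Si *m @Wmat R N.+1 m k l *m u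
   - (@Wmat R N.+1 m k l)^T *m Si *m (beta + @Zmat R N.+1 m k l *m deltavec D)
   = (@Wmat R N.+1 m k l)^T *m Si *m res k l.
  move=> k l; rewrite -mulmxA -mulmxBr; congr (_ *m _).
  rewrite /Wmat /u mul_row_col mul1mx /res.
  apply/matrixP => i j; rewrite !mxEadd !mxEopp !mxEadd; ring.
apply/eqP; rewrite -subr_eq0; apply/eqP.
rewrite /Mg /glsM /rhs mulmx_suml.
under eq_bigr do rewrite mulmx_suml.
rewrite -sumrB.
under eq_bigr do rewrite -sumrB.
rewrite -/Si (eq_bigr _ (fun k _ => eq_bigr _ (fun l _ => E1 k l))).
rewrite /Si invSigma // -bE.
set Y := _ *: (1%:M - _).
have E2 : forall (k : 'I_m) (l : 'I_N),
   (@Wmat R N.+1 m k l)^T *m Y *m res k l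
   = col_mx (Y *m res k l) ((@Xmat R N.+1 m k l)^T *m (Y *m res k l)).
  by move=> k l; rewrite -mulmxA /Wmat tr_row_mx trmx1 mul_col_mx mul1mx.
rewrite (eq_bigr _ (fun k _ => eq_bigr _ (fun l _ => E2 k l))).
under eq_bigr do rewrite sum_col_mx.
rewrite sum_col_mx -(col_mx0 _ N.+1 m 1); congr col_mx.
  apply/matrixP => j z; rewrite (ord1 z) summxE [RHS]mxE.
  transitivity ((se2 / n%:R)^-1 * (\sum_(k < m) \sum_(0 <= l < N) ee N dl thf k l j
      - b * \sum_(k < m) \sum_(0 <= l < N) SS N dl thf k l)).
    rewrite mulrBr mulrA !mulr_sumr -sumrB; apply: eq_bigr => k _.
    rewrite summxE !big_mkord !mulr_sumr -sumrB; apply: eq_bigr => l _.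
    rewrite /Y YE resE /SS big_mkord.
    under [in RHS]eq_bigr do rewrite -resE.
    by rewrite mulrBr mulrA.
  by rewrite top ?topS // ?mulr0 ?subrr ?mulr0 // -ltnS.
apply/matrixP => k' z; rewrite (ord1 z) summxE [RHS]mxE.
rewrite (bigD1 k') //= [X in _ + X]big1 ?addr0; last first.
  move=> k hk; rewrite summxE; apply: big1 => l _; rewrite mxE; apply: big1 => j _.
  by rewrite !mxE /xind eq_sym (negbTE hk) /= mulr0n mul0r.
transitivity ((se2 / n%:R)^-1 * \sum_(0 <= l < N) \sum_(0 <= j < N.+1)
    ((l < j)%N)%:R * (ee N dl thf k' l j - b * SS N dl thf k' l)).
  rewrite summxE mulr_sumr big_mkord; apply: eq_bigr => l _.
  rewrite mxE mulr_sumr big_mkord; apply: eq_bigr => j _.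
  rewrite [X in X * _]mxE [X in X * _]mxE /xind eqxx /= /Y YE resE /SS big_mkord.
  under [in RHS]eq_bigr do rewrite -resE.
  by rewrite mulrCA.
by rewrite (bottom hN hm (Hrel k')) mulr0.
Qed.
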